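(* For every $n\ge 2$, $\mathrm{isat}(n,\mathcal{V}_2)=\mathrm{isat}(n,\Lambda_2)=n+1$.
   Context: $\mathcal{B}_n$ denotes the Boolean lattice $(2^{[n]},\subseteq)$. A family $\mathcal{F}\subseteq 2^{[n]}$ (ordered by inclusion) is induced-$\mathcal{P}$-saturated if it contains no induced copy of $\mathcal{P}$ (an injection $f$ with $u\le v\iff f(u)\subseteq f(v)$) but every family $\mathcal{F}'$ with $\mathcal{F}\subsetneq\mathcal{F}'\subseteq 2^{[n]}$ contains one. $\mathrm{isat}(n,\mathcal{P})$ is the minimum size of an induced-$\mathcal{P}$-saturated family in $\mathcal{B}_n$. $\mathcal{V}_2$ is the three-element poset with one minimal element below two incomparable maximal elements; $\Lambda_2$ is the three-element poset with one maximal element above two incomparable minimal elements. *)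

(* Defs.v *)
From mathcomp Require Import all_boot.
Set Implicit Arguments. Unset Strict Implicit. Unset Printing Implicit Defensive.

(* A finite poset P is given by a carrier finType and its order relation le.
   The Boolean lattice B_n is {set 'I_n} ordered by \subset; a family is
   F : {set {set 'I_n}}. *)

Definition has_induced_copy (P : finType) (le : rel P) (n : nat)
    (F : {set {set 'I_n}}) : Prop :=
  exists f : P -> {set 'I_n},
    [/\ injective f, (forall u, f u \in F) &
        (forall u v, le u v = (f u \subset f v))].

Definition induced_saturated (P : finType) (le : rel P) (n : nat)
    (F : {set {set 'I_n}}) : Prop :=
  ~ has_induced_copy le F /\
  (forall F' : {set {set 'I_n}}, F \proper F' -> has_induced_copy le F').

(* isat n P = k : k is the minimum size of an induced-P-saturated family in B_n. *)
Definition isat_eq (P : finType) (le : rel P) (n k : nat) : Prop :=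
  (exists F : {set {set 'I_n}}, induced_saturated le F /\ #|F| = k) /\
  (forall F : {set {set 'I_n}}, induced_saturated le F -> k <= #|F|).

(* V_2 on 'I_3: 0 is the minimum, 1 and 2 are incomparable maximal elements. *)
Definition V2_le : rel 'I_3 :=
  fun u v => (u == v) || (nat_of_ord u == 0).

(* Lambda_2 on 'I_3: 2 is the maximum, 0 and 1 are incomparable minimal elements. *)
Definition Lambda2_le : rel 'I_3 :=
  fun u v => (u == v) || (nat_of_ord v == 2).

(* Main.v *)
Require Import Defs.
From mathcomp Require Import all_boot.
Set Implicit Arguments. Unset Strict Implicit. Unset Printing Implicit Defensive.

Section Tri.
Variable n : nat.
Local Notation S := {set 'I_n}.

Definition V2t (F : {set S}) := exists a b c : S,
  [/\ a \in F, b \in F, c \in F & [/\ a \subset b, a \subset c, ~~ (b \subset c) & ~~ (c \subset b)]].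
Definition L2t (F : {set S}) := exists a b c : S,
  [/\ a \in F, b \in F, c \in F & [/\ a \subset c, b \subset c, ~~ (a \subset b) & ~~ (b \subset a)]].

Definition o0 : 'I_3 := @Ordinal 3 0 isT.
Definition o1 : 'I_3 := @Ordinal 3 1 isT.
Definition o2 : 'I_3 := @Ordinal 3 2 isT.

Definition mk3 (a b c : S) (u : 'I_3) : S :=
  if val u == 0 then a else if val u == 1 then b else c.

Lemma I3_cases (P : 'I_3 -> Prop) : P o0 -> P o1 -> P o2 -> forall u, P u.
Proof.
move=> h0 h1 h2 [[|[|[|m]]] hm] //.
- by rewrite (_ : Ordinal hm = o0) //; apply: val_inj.
- by rewrite (_ : Ordinal hm = o1) //; apply: val_inj.
- by rewrite (_ : Ordinal hm = o2) //; apply: val_inj.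
Qed.

Lemma inj_of_le (le : rel 'I_3) (f : 'I_3 -> S) :
  (forall u v, le u v -> le v u -> u = v) ->
  (forall u v, le u v = (f u \subset f v)) -> injective f.
Proof.
move=> anti hr u v e; apply: anti; rewrite hr e //.
Qed.

Lemma V2P F : has_induced_copy V2_le F <-> V2t F.
Proof.
split.
- case=> f [_ hF hr]; exists (f o0), (f o1), (f o2); split => //; split;
  by rewrite -hr.
- move=> [a [b [c [ha hb hc [hab hac hbc hcb]]]]].
  have hba : ~~ (b \subset a).
    by apply: contraNN hbc => /subset_trans; apply.
  have hca : ~~ (c \subset a).
    by apply: contraNN hcb => /subset_trans; apply.
  have hr : forall u v, V2_le u v = (mk3 a b c u \subset mk3 a b c v).
    apply: (I3_cases (P := fun u => forall v, _ = _));
    apply: (I3_cases (P := fun v => _ = _)); rewrite /mk3 /= ?subxx //;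
    by apply/esym/negbTE.
  exists (mk3 a b c); split => //.
  + apply: (inj_of_le (le := V2_le)) => //.
    by apply: (I3_cases (P := fun u => forall v, _ -> _ -> _)); apply: I3_cases.
  + by apply: I3_cases.
Qed.

Lemma L2P F : has_induced_copy Lambda2_le F <-> L2t F.
Proof.
split.
- case=> f [_ hF hr]; exists (f o0), (f o1), (f o2); split => //; split;
  by rewrite -hr.
- move=> [a [b [c [ha hb hc [hac hbc hab hba]]]]].
  have hca : ~~ (c \subset a).
    by apply: contraNN hba => /(subset_trans hbc).
  have hcb : ~~ (c \subset b).
    by apply: contraNN hab => /(subset_trans hac).
  have hr : forall u v, Lambda2_le u v = (mk3 a b c u \subset mk3 a b c v).
    apply: (I3_cases (P := fun u => forall v, _ = _));
    apply: (I3_cases (P := fun v => _ = _)); rewrite /mk3 /= ?subxx //;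
    by apply/esym/negbTE.
  exists (mk3 a b c); split => //.
  + apply: (inj_of_le (le := Lambda2_le)) => //.
    by apply: (I3_cases (P := fun u => forall v, _ -> _ -> _)); apply: I3_cases.
  + by apply: I3_cases.
Qed.

Definition compF (F : {set S}) : {set S} := [set ~: A | A in F].

Lemma compFK : involutive compF.
Proof.
move=> F; apply/setP => A; apply/imsetP/idP.
- by case=> B /imsetP [C hC ->] ->; rewrite setCK.
- by move=> hA; exists (~: A); [apply: imset_f | rewrite setCK].
Qed.

Lemma mem_compF (F : {set S}) (A : S) : (A \in compF F) = (~: A \in F).
Proof.
apply/imsetP/idP.
- by case=> B hB ->; rewrite setCK.
- by move=> h; exists (~: A) => //; rewrite setCK.
Qed.

Lemma card_compF (F : {set S}) : #|compF F| = #|F|.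
Proof. by rewrite card_imset //; apply: setC_inj. Qed.

Lemma compF_sub (F G : {set S}) : F \subset G -> compF F \subset compF G.
Proof. by move=> h; apply: imsetS. Qed.

Lemma compF_proper (F G : {set S}) : F \proper G -> compF F \proper compF G.
Proof.
by rewrite !properEcard !card_compF => /andP [h1 h2]; rewrite compF_sub.
Qed.

Lemma V2_L2 (F : {set S}) : V2t F <-> L2t (compF F).
Proof.
split.
- move=> [a [b [c [ha hb hc [hab hac hbc hcb]]]]].
  exists (~: b), (~: c), (~: a); rewrite !mem_compF !setCK !setCS; by split.
- move=> [a [b [c [ha hb hc [hac hbc hab hba]]]]].
  rewrite !mem_compF in ha hb hc.
  exists (~: c), (~: a), (~: b); rewrite !setCS; by split.
Qed.

Definition satV (F : {set S}) := ~ V2t F /\ forall F' : {set S}, F \proper F' -> V2t F'.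
Definition satL (F : {set S}) := ~ L2t F /\ forall F' : {set S}, F \proper F' -> L2t F'.

Lemma satV_P (F : {set S}) : induced_saturated V2_le F <-> satV F.
Proof.
rewrite /induced_saturated /satV; split.
- by case=> h1 h2; split => [/V2P//|F' /h2/V2P].
- by case=> h1 h2; split => [/V2P//|F' /h2/V2P].
Qed.

Lemma satL_P (F : {set S}) : induced_saturated Lambda2_le F <-> satL F.
Proof.
rewrite /induced_saturated /satL; split.
- by case=> h1 h2; split => [/L2P//|F' /h2/L2P].
- by case=> h1 h2; split => [/L2P//|F' /h2/L2P].
Qed.

Lemma satV_L (F : {set S}) : satV F -> satL (compF F).
Proof.
case=> h1 h2; split.
- by move/V2_L2/h1.
- move=> G hG; have := compF_proper hG; rewrite compFK => /h2.
  by move/V2_L2; rewrite compFK.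
Qed.

Lemma satL_V (G : {set S}) : satL G -> satV (compF G).
Proof.
case=> h1 h2; split.
- by move=> /V2_L2; rewrite compFK.
- move=> F hF; have := compF_proper hF; rewrite compFK => /h2.
  by move/V2_L2.
Qed.

Lemma notin_sub (A B : S) i : A \subset B :\ i -> i \notin A.
Proof. by move=> h; apply/negP => /(subsetP h); rewrite setD11. Qed.

Lemma sub_D1 (A C : S) i : A \subset C -> i \notin A -> A \subset C :\ i.
Proof.
move=> h hi; apply/subsetP => j hj; rewrite in_setD1 (subsetP h) // andbT.
by apply: contraNneq hi => <-.
Qed.

Lemma proper_U1 (F : {set S}) X : X \notin F -> F \proper X |: F.
Proof.
move=> hX; rewrite properE subsetUr /=; apply/negP => /subsetP h.
by move: (h X (setU11 _ _)); rewrite (negbTE hX).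
Qed.

Section Sat.
Variable F : {set S}.
Hypothesis hF : satV F.

Lemma satX X : X \notin F -> V2t (X |: F).
Proof. by move=> hX; apply: hF.2; apply: proper_U1. Qed.

Lemma noV2 a b c : a \in F -> b \in F -> c \in F -> a \subset b -> a \subset c ->
  ~~ (b \subset c) -> ~~ (c \subset b) -> False.
Proof. by move=> *; apply: hF.1; exists a, b, c. Qed.

Lemma top_in : setT \in F.
Proof.
apply/negPn/negP => hT.
move: (satX hT) => [a [b [c [ha hb hc [hab hac hbc hcb]]]]].
rewrite !in_setU1 in ha hb hc.
case/orP: hb => [/eqP eb|hb]; first by rewrite eb subsetT in hcb.
case/orP: hc => [/eqP ec|hc]; first by rewrite ec subsetT in hbc.
case/orP: ha => [/eqP ea|ha]; last by apply: (noV2 ha hb hc).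
move: hab; rewrite ea subTset => /eqP eb; by rewrite -eb hb in hT.
Qed.

Lemma step i : forall B, B \in F -> i \in B -> (exists2 A, A \in F & A \subset B :\ i) ->
  exists c, [/\ c \in F, i \notin c & i |: c \in F].
Proof.
move=> B; have [k] := ubnP #|B|; elim: k B => // k IH B hk hB hiB [A hA hAX].
set X := B :\ i.
case: (boolP (X \in F)) => hXF.
  by exists X; rewrite setD11 setD1K.
have hXB : X \subset B by apply: subD1set.
have H : forall a c, a \in F -> c \in F -> a \subset X -> a \subset c ->
    ~~ (X \subset c) -> ~~ (c \subset X) -> exists c, [/\ c \in F, i \notin c & i |: c \in F].
  move=> a c ha hc haX hac hXc hcX.
  have haB : a \subset B by apply: subset_trans hXB.
  case: (boolP (B \subset c)) => hBc.
    by rewrite (subset_trans hXB hBc) in hXc.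
  case: (boolP (c \subset B)) => hcB; last by case: (noV2 ha hB hc haB hac hBc hcB).
  have hic : i \in c.
    apply/negPn/negP => hic; move: hcX; by rewrite sub_D1.
  have hcne : c != B by apply: contraNneq hXc => ->.
  have hcard : #|c| < #|B| by apply: proper_card; rewrite properEneq hcne.
  apply: (IH c) => //; first by apply: leq_trans hcard _.
  exists a => //; apply: sub_D1 => //; exact: (notin_sub haX).
move: (satX hXF) => [a [b [c [ha hb hc [hab hac hbc hcb]]]]].
rewrite !in_setU1 in ha hb hc.
case/orP: ha => [/eqP ea|ha].
  subst a.
  case/orP: hb => [/eqP eb|hb]; first by rewrite eb hac in hbc.
  case/orP: hc => [/eqP ec|hc]; first by rewrite ec hab in hcb.
  by case: (noV2 hA hb hc (subset_trans hAX hab) (subset_trans hAX hac) hbc hcb).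
case/orP: hb => [/eqP eb|hb].
  subst b.
  case/orP: hc => [/eqP ec|hc]; first by rewrite ec subxx in hbc.
  exact: (H a c).
case/orP: hc => [/eqP ec|hc]; last by case: (noV2 ha hb hc hab hac hbc hcb).
subst c; exact: (H a b).
Qed.


Lemma key i : exists c, [/\ c \in F, i \notin c & i |: c \in F].
Proof.
apply: (step (B := setT)) => //; first exact: top_in.
set X := setT :\ i.
case: (boolP (X \in F)) => hXF; first by exists X.
move: (satX hXF) => [a [b [c [ha hb hc [hab hac hbc hcb]]]]].
rewrite !in_setU1 in ha hb hc.
case/orP: ha => [/eqP ea|ha].
  subst a.
  case/orP: hb => [/eqP eb|hb]; first by rewrite eb hac in hbc.
  case: (boolP (i \in b)) => hib.
    have eb : b = setT.
      apply/eqP; rewrite eqEsubset subsetT /=; apply/subsetP => j _.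
      case: (eqVneq j i) => [->//|hji].
      by apply: (subsetP hab); rewrite in_setD1 hji inE.
    by rewrite eb subsetT in hcb.
  have : b \subset X by apply: sub_D1 => //; apply: subsetT.
  move=> hbX; have ebX : b = X by apply/eqP; rewrite eqEsubset hbX hab.
  by rewrite -ebX hb in hXF.
case/orP: hb => [/eqP eb|hb]; first by exists a => //; rewrite -eb.
case/orP: hc => [/eqP ec|hc]; first by exists a => //; rewrite -ec.
by case: (noV2 ha hb hc hab hac hbc hcb).
Qed.

Definition g (i : 'I_n) : S :=
  odflt set0 [pick c | (c \in F) && (i \notin c) && (i |: c \in F)].

Lemma gP i : [/\ g i \in F, i \notin g i & i |: g i \in F].
Proof.
rewrite /g; case: pickP => [c /andP [/andP [h1 h2] h3]|hn] //=.
by case: (key i) => c [h1 h2 h3]; move: (hn c); rewrite h1 h2 h3.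
Qed.

Lemma g_inj : injective g.
Proof.
move=> i j e; apply/eqP/negPn/negP => hij.
case: (gP i) => h1 h2 h3; case: (gP j) => _ _; rewrite -e => h4.
apply: (noV2 h1 h3 h4); rewrite ?subsetUr //.
- apply/negP => /subsetP /(_ i (setU11 _ _)); by rewrite in_setU1 (negbTE hij) (negbTE h2).
- apply/negP => /subsetP /(_ j (setU11 _ _)).
  rewrite in_setU1 eq_sym (negbTE hij) /=; rewrite e; by case: (gP j) => _ /negbTE ->.
Qed.

Lemma lower : n.+1 <= #|F|.
Proof.
have hsub : setT |: (g @: setT) \subset F.
  apply/subsetP => A; rewrite in_setU1 => /orP [/eqP ->|/imsetP [i _ ->]].
    exact: top_in.
  by case: (gP i).
apply: leq_trans (subset_leq_card hsub).
rewrite cardsU1 card_imset; last exact: g_inj.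
rewrite cardsT card_ord.
have -> : setT \notin g @: setT.
  apply/imsetP => [[i _ e]]; case: (gP i) => _; by rewrite -e inE.
done.
Qed.

End Sat.

Definition C (k : nat) : S := [set j : 'I_n | j < k].
Definition F0 : {set S} := [set C k | k : 'I_n.+1].

Lemma C_card k : k <= n -> #|C k| = k.
Proof.
move=> hk.
have -> : C k = [set widen_ord hk j | j : 'I_k].
  apply/setP => j; rewrite inE; apply/idP/imsetP => [hj|[m _ ->]].
    by exists (Ordinal hj) => //; apply: val_inj.
  by rewrite /= ltn_ord.
by rewrite card_imset ?card_ord //; by move=> x y /(congr1 val) /= e; apply: val_inj.
Qed.

Lemma C_mono a b : a <= b -> C a \subset C b.
Proof.
move=> h; apply/subsetP => j; rewrite !inE => hj; exact: leq_trans hj h.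
Qed.

Lemma F0_card : #|F0| = n.+1.
Proof.
rewrite card_imset ?card_ord // => a b e.
apply: ord_inj; rewrite -(C_card (ltnSE (ltn_ord a))) -(C_card (ltnSE (ltn_ord b))).
by rewrite e.
Qed.

Lemma F0_sat : satV F0.
Proof.
split.
  move=> [a [b [c [ha hb hc [hab hac hbc hcb]]]]].
  case/imsetP: hb => k1 _ e1; case/imsetP: hc => k2 _ e2; subst b c.
  case: (leqP k1 k2) => h.
    by rewrite (C_mono h) in hbc.
  by rewrite (C_mono (ltnW h)) in hcb.
move=> F' /properP [hsub [X hX hXn]].
have hXc : #|X| <= n by apply: leq_trans (max_card _) _; rewrite card_ord.
have hXc' : #|X| < n.+1 by [].
pose k : 'I_n.+1 := Ordinal hXc'.
have hCk : C k \in F0 by apply/imsetP; exists k.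
have hC0 : C 0 \in F0 by apply/imsetP; exists ord0.
have hcard : #|C k| = #|X| by rewrite C_card.
exists (C 0), X, (C k); split.
- exact: (subsetP hsub).
- exact: hX.
- exact: (subsetP hsub).
split.
- by apply/subsetP => j; rewrite inE.
- by apply/subsetP => j; rewrite inE.
- apply/negP => h; have e : X = C k by apply/eqP; rewrite eqEcard h hcard leqnn.
  by rewrite e hCk in hXn.
- apply/negP => h; have e : C k = X by apply/eqP; rewrite eqEcard h -hcard leqnn.
  by rewrite -e hCk in hXn.
Qed.
End Tri.

Theorem theorem1p4 (n : nat) (hn : 2 <= n) :
  isat_eq V2_le n n.+1 /\ isat_eq Lambda2_le n n.+1.
Proof.
split; split.
- exists (F0 n); split; [apply/satV_P; exact: F0_sat | exact: F0_card].
- by move=> F /satV_P hF; exact: lower hF.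
- exists (compF (F0 n)); split.
    by apply/satL_P; apply: satV_L; exact: F0_sat.
  by rewrite card_compF F0_card.
- move=> G /satL_P hG; rewrite -card_compF; exact: lower (satL_V hG).
Qed.
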